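(* For every $k\ge0$, $$t_k=\sum_{n\ge0}\frac{(-1)^n}{n!}I_0^nI_{n+k},$$ $$s_k=\sum_{n\ge0}\sum_{i=0}^n\frac{(-1)^{n+1}I_0^iJ_0^{2n-2i+1}}{2^{n-i}\,i!\,(n-i)!\,(2n-2i+1)}I_{n+k+1}+\sum_{n\ge0}\frac{(-1)^n}{n!}\Big(I_0+\tfrac12J_0^2\Big)^nJ_{n+k}.$$ In particular the change of variables $(\mathbf t,\mathbf s)\mapsto(I_k,J_k)_{k\ge0}$ is invertible.
   Context: Let $\mathbf t=(t_0,t_1,\dots)$, $\mathbf s=(s_0,s_1,\dots)$ be formal variables and $\tilde t_n=t_n-\delta_{n,1}$. Let $v=v(\mathbf t)$ and $r=r(\mathbf t,\mathbf s)$ be the unique formal power series with $v(0)=0$, $r(0)=0$ solving the genus-zero Euler–Lagrange equations $\sum_{n\ge0}\tilde t_n\frac{v^n}{n!}=0$ and $\sum_{n\ge0}\tilde t_{n+1}\sum_{i=0}^n\frac{v^ir^{2n-2i+1}}{i!(2n-2i+1)!!}+\sum_{n\ge0}\frac{s_n}{n!}\big(v+\frac{r^2}2\big)^n=0$ (these are $v_{\rm top}=\partial_{t_0}^2\mathcal F^c_0$ and $r_{\rm top}=\partial_{t_0}\mathcal F^o_0$). Define the Itzykson–Zuber type variables $I_k=\sum_{n\ge0}t_{n+k}\frac{v^n}{n!}$, $J_k=\sum_{n\ge0}t_{n+k+1}\sum_{i=0}^n\frac{v^ir^{2n-2i+1}}{i!(2n-2i+1)!!}+\sum_{n\ge0}\frac{s_{n+k}}{n!}\big(v+\frac{r^2}2\big)^n$,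 $k\ge0$. (One has $I_0=v$, $J_0=r$.) *)

(* Defs.v *)
(* Formal power series over Q in the countably many
   variables t_0, t_1, ..., s_0, s_1, ...  (variable t_i has index 2i,
   variable s_i has index 2i+1).  A monomial is a list of exponents
   (position j = exponent of variable j), taken modulo trailing zeros. *)
From mathcomp Require Import all_boot all_order all_algebra.
From Stdlib Require Import ClassicalEpsilon.
Set Implicit Arguments. Unset Strict Implicit. Unset Printing Implicit Defensive.
Import Order.TTheory GRing.Theory Num.Theory.
Local Open Scope ring_scope.

Fixpoint strip (m : seq nat) : seq nat :=
  match m with
  | [::] => [::]
  | x :: m' => let t := strip m' in
               if (x == 0)%N && (t == [::]) then [::] else x :: t
  end.

(* a formal power series = its coefficient function on monomials;
   only the values on stripped monomials are ever used *)
Definition ps := seq nat -> rat.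

Fixpoint divs (m : seq nat) : seq (seq nat) :=
  match m with
  | [::] => [:: [::]]
  | x :: m' => [seq a :: d | a <- iota 0 x.+1, d <- divs m']
  end.

Definition ps_const (c : rat) : ps := fun m => if strip m == [::] then c else 0.
Definition ps_zero : ps := ps_const 0.
Definition ps_one : ps := ps_const 1.
Definition ps_add (f g : ps) : ps := fun m => f (strip m) + g (strip m).
Definition ps_opp (f : ps) : ps := fun m => - f (strip m).
Definition ps_sub (f g : ps) : ps := ps_add f (ps_opp g).
Definition ps_scale (c : rat) (f : ps) : ps := fun m => c * f (strip m).
Definition ps_mul (f g : ps) : ps := fun m =>
  let m' := strip m in
  \sum_(a <- divs m') f (strip a) * g (strip [seq x.1 - x.2 | x <- zip m' a]%N).
Definition ps_pow (f : ps) (n : nat) : ps := iter n (ps_mul f) ps_one.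

Definition ps_var (j : nat) : ps :=
  fun m => if strip m == rcons (nseq j 0%N) 1%N then 1 else 0.
Definition tv (n : nat) : ps := ps_var (2 * n).
Definition sv (n : nat) : ps := ps_var (2 * n).+1.
Definition ttv (n : nat) : ps :=
  if n == 1%N then ps_sub (tv 1) ps_one else tv n.

(* infinite sum, coefficientwise: the coefficient of m is the eventual
   value of the partial sums (the sum is meaningful when, for every
   monomial, the partial sums are eventually constant, which is the case
   for all sums below) *)
Definition ps_sum (F : nat -> ps) : ps := fun m =>
  epsilon (inhabits 0) (fun c : rat =>
    exists N, forall N', (N <= N')%N -> \sum_(n < N') F n (strip m) = c).

Fixpoint dfact (n : nat) : nat :=
  match n with
  | 0 | 1 => 1
  | n'.+2 => n'.+2 * dfact n'
  end%N.

Definition invn (n : nat) : rat := (n%:R)^-1.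

Definition Pn (v r : ps) (n : nat) : ps :=
  \big[ps_add/ps_zero]_(i < n.+1)
    ps_scale (invn (i`! * dfact (2 * n - 2 * i + 1))%N)
             (ps_mul (ps_pow v i) (ps_pow r (2 * n - 2 * i + 1))).

Definition wvr (v r : ps) : ps := ps_add v (ps_scale (invn 2) (ps_pow r 2)).

Definition EL1 (v : ps) : Prop :=
  ps_sum (fun n => ps_scale (invn n`!) (ps_mul (ttv n) (ps_pow v n))) = ps_zero.
Definition EL2 (v r : ps) : Prop :=
  ps_add (ps_sum (fun n => ps_mul (ttv n.+1) (Pn v r n)))
         (ps_sum (fun n => ps_scale (invn n`!) (ps_mul (sv n) (ps_pow (wvr v r) n))))
  = ps_zero.

Definition Ik (v : ps) (k : nat) : ps :=
  ps_sum (fun n => ps_scale (invn n`!) (ps_mul (tv (n + k)) (ps_pow v n))).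
Definition Jk (v r : ps) (k : nat) : ps :=
  ps_add (ps_sum (fun n => ps_mul (tv (n + k).+1) (Pn v r n)))
         (ps_sum (fun n => ps_scale (invn n`!) (ps_mul (sv (n + k)) (ps_pow (wvr v r) n)))).

Definition sgn (n : nat) : rat := (-1) ^+ n.

Definition t_inv (v : ps) (k : nat) : ps :=
  ps_sum (fun n => ps_scale (sgn n * invn n`!)
                            (ps_mul (ps_pow (Ik v 0) n) (Ik v (n + k)))).

Definition s_inv (v r : ps) (k : nat) : ps :=
  ps_add
    (ps_sum (fun n =>
       \big[ps_add/ps_zero]_(i < n.+1)
         ps_scale (sgn n.+1 *
                   invn (2 ^ (n - i) * i`! * (n - i)`! * (2 * n - 2 * i + 1))%N)
           (ps_mul (ps_mul (ps_pow (Ik v 0) i) (ps_pow (Jk v r 0) (2 * n - 2 * i + 1)))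
                   (Ik v (n + k).+1))))
    (ps_sum (fun n => ps_scale (sgn n * invn n`!)
        (ps_mul (ps_pow (ps_add (Ik v 0) (ps_scale (invn 2) (ps_pow (Jk v r 0) 2))) n)
                (Jk v r (n + k))))).

(* Main.v *)
Require Import Defs.
From HB Require Import structures.
From mathcomp Require Import all_boot all_order all_algebra.
From mathcomp Require Import boolp.
From mathcomp Require Import ring zify.
From Stdlib Require Import ProofIrrelevance FunctionalExtensionality ClassicalEpsilon.
Set Implicit Arguments. Unset Strict Implicit. Unset Printing Implicit Defensive.
Import Order.TTheory GRing.Theory Num.Theory.
Local Open Scope ring_scope.


Definition sub (m a : seq nat) : seq nat := [seq (x.1 - x.2)%N | x <- zip m a].

Lemma sub_cons x m a d : sub (x :: m) (a :: d) = (x - a)%N :: sub m d.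
Proof. by []. Qed.

Lemma strip_idem m : strip (strip m) = strip m.
Proof.
elim: m => //= x m IH.
case: ifP => //= H; by rewrite IH H.
Qed.

Lemma strip_nseq k : strip (nseq k 0%N) = [::].
Proof. by elim: k => //= k ->. Qed.

Lemma strip_cat0 l k : strip (l ++ nseq k 0%N) = strip l.
Proof. elim: l => [|x l IH] /=; [exact: strip_nseq | by rewrite IH]. Qed.

Lemma strip_eq m : exists k, m = strip m ++ nseq k 0%N.
Proof.
elim: m => [|x m [k Hk]]; first by exists 0%N.
rewrite /=; case: ifP => [/andP[/eqP -> /eqP E]|_].
  by exists k.+1; rewrite /= {1}Hk E.
by exists k; rewrite /= {1}Hk.
Qed.

Lemma sumn_strip m : sumn (strip m) = sumn m.
Proof.
have [k Hk] := strip_eq m; rewrite {2}Hk sumn_cat.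
suff -> : sumn (nseq k 0%N) = 0%N by rewrite addn0.
by clear Hk; elim: k.
Qed.

Lemma strip_nilP m : (strip m == [::]) = (sumn m == 0%N).
Proof.
elim: m => //= x m IH; rewrite addn_eq0 -IH.
by case: (x == 0%N); case: (strip m == [::]).
Qed.

Lemma sum_divs_cons (F : seq nat -> rat) x m :
  \sum_(b <- divs (x :: m)) F b = \sum_(0 <= a < x.+1) \sum_(d <- divs m) F (a :: d).
Proof.
change (divs (x :: m)) with [seq a :: d | a <- iota 0 x.+1, d <- divs m].
rewrite big_allpairs_dep.
by have -> : iota 0 x.+1 = index_iota 0 x.+1 by rewrite /index_iota subn0.
Qed.

Lemma divs_nseq k : divs (nseq k 0%N) = [:: nseq k 0%N].
Proof. by elim: k => //= k ->. Qed.

Lemma divs_mem x m b : b \in divs (x :: m) ->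
  exists a d, [/\ (a <= x)%N, d \in divs m & b = a :: d].
Proof.
move=> /allpairsPdep [a [d [Ha Hd ->]]]; exists a, d; split=> //.
by move: Ha; rewrite mem_iota add0n ltnS.
Qed.

Lemma divs_size m b : b \in divs m -> size b = size m.
Proof.
elim: m b => [|x m IH] b; first by rewrite inE => /eqP ->.
by move/divs_mem => [a [d [_ Hd ->]]] /=; rewrite (IH _ Hd).
Qed.

Lemma divs_sumn m b : b \in divs m -> (sumn b + sumn (sub m b) = sumn m)%N.
Proof.
elim: m b => [|x m IH] b; first by rewrite inE => /eqP ->.
move/divs_mem => [a [d [Ha Hd ->]]]; rewrite sub_cons /=.
rewrite -(IH _ Hd); rewrite addnACA subnKC //.
Qed.

Lemma sum_divs_cat (F : seq nat -> rat) y z :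
  \sum_(b <- divs (y ++ z)) F b = \sum_(b <- divs y) \sum_(c <- divs z) F (b ++ c).
Proof.
elim: y F => [|x y IH] F.
  rewrite cat0s [divs [::]]/= big_cons big_nil addr0.
  by apply: eq_bigr.
rewrite cat_cons !sum_divs_cons; apply: eq_bigr => a _.
rewrite IH; apply: eq_bigr => b _; by [].
Qed.

Lemma sub_cat y b z c : size y = size b -> sub (y ++ z) (b ++ c) = sub y b ++ sub z c.
Proof. by move=> H; rewrite /sub zip_cat // map_cat. Qed.

Lemma sub_nseq k : sub (nseq k 0%N) (nseq k 0%N) = nseq k 0%N.
Proof. by elim: k => // k IH; rewrite -[RHS]/(0%N :: nseq k 0%N) -[in RHS]IH. Qed.

Lemma conv_strip (G : seq nat -> seq nat -> rat) x :
  \sum_(b <- divs (strip x)) G (strip b) (strip (sub (strip x) b)) =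
  \sum_(b <- divs x) G (strip b) (strip (sub x b)).
Proof.
have [k Hk] := strip_eq x; rewrite [in RHS]Hk sum_divs_cat.
apply: eq_big_seq => b Hb; rewrite divs_nseq big_cons big_nil addr0.
rewrite sub_cat; last by rewrite (divs_size Hb).
by rewrite sub_nseq !strip_cat0.
Qed.


Lemma sum_cond_ge {R : zmodType} (F : nat -> R) b n : (b <= n)%N ->
  \sum_(0 <= a < n | (b <= a)%N) F a = \sum_(b <= a < n) F a.
Proof.
move=> Hb; rewrite (big_cat_nat (leq0n b) Hb) /= big1_seq ?add0r.
  rewrite big_nat_cond [RHS]big_nat_cond; apply: eq_bigl => a.
  by rewrite andbT andbC andbA andbb.
by move=> a /andP[Ha]; rewrite mem_index_iota => /andP[_]; rewrite ltnNge Ha.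
Qed.

Lemma tri3 {R : zmodType} (K : nat -> nat -> nat -> R) x :
  \sum_(0 <= a < x.+1) \sum_(0 <= b < a.+1) K b (a - b)%N (x - a)%N =
  \sum_(0 <= b < x.+1) \sum_(0 <= c < (x - b).+1) K b c (x - b - c)%N.
Proof.
transitivity (\sum_(0 <= a < x.+1) \sum_(0 <= b < x.+1 | (b <= a)%N) K b (a - b)%N (x - a)%N).
  apply: eq_big_nat => a /andP[_ Ha].
  rewrite (big_nat_widen 0 a.+1 x.+1) //; apply: eq_bigl => b; by rewrite ltnS.
rewrite (exchange_big_dep_nat predT) //; apply: eq_big_nat => b /andP[_ Hb].
rewrite sum_cond_ge; last by rewrite ltnW.
rewrite -[X in \big[_/_]_(X <= _ < _) _]add0n big_addn.
have -> : (x.+1 - b = (x - b).+1)%N by rewrite subSn.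
apply: eq_big_nat => c /andP[_ Hc].
by rewrite addnK [(c + b)%N]addnC subnDA.
Qed.

Definition LS m (H : seq nat -> seq nat -> seq nat -> rat) :=
  \sum_(a <- divs m) \sum_(b <- divs a) H b (sub a b) (sub m a).
Definition RS m (H : seq nat -> seq nat -> seq nat -> rat) :=
  \sum_(b <- divs m) \sum_(c <- divs (sub m b)) H b c (sub (sub m b) c).

Lemma LS_cons x m H : LS (x :: m) H =
  \sum_(0 <= a < x.+1) \sum_(0 <= b < a.+1)
     LS m (fun b' c e => H (b :: b') ((a - b)%N :: c) ((x - a)%N :: e)).
Proof.
rewrite /LS sum_divs_cons; apply: eq_bigr => a _.
under eq_bigr => d _ do rewrite sum_divs_cons.
by rewrite exchange_big.
Qed.

Lemma RS_cons x m H : RS (x :: m) H =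
  \sum_(0 <= b < x.+1) \sum_(0 <= c < (x - b).+1)
     RS m (fun b' c' e => H (b :: b') (c :: c') ((x - b - c)%N :: e)).
Proof.
rewrite /RS sum_divs_cons; apply: eq_bigr => b _.
under eq_bigr => d _ do rewrite sub_cons sum_divs_cons.
by rewrite exchange_big.
Qed.

Lemma assoc_raw m H : LS m H = RS m H.
Proof.
elim: m H => [|x m IH] H.
  by rewrite /LS /RS /= !big_cons !big_nil !addr0.
rewrite LS_cons RS_cons.
under eq_bigr => a _ do under eq_bigr => b _ do rewrite IH.
exact: (tri3 (fun b c d => RS m (fun b' c' e => H (b :: b') (c :: c') (d :: e)))).
Qed.

Lemma comm_raw m (H : seq nat -> seq nat -> rat) :
  \sum_(b <- divs m) H b (sub m b) = \sum_(b <- divs m) H (sub m b) b.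
Proof.
elim: m H => [|x m IH] H; first by rewrite /= !big_cons !big_nil.
rewrite !sum_divs_cons.
under eq_bigr => a _ do rewrite (IH (fun b c => H (a :: b) ((x - a)%N :: c))).
rewrite big_nat_rev; apply: eq_big_nat => a /andP[_ Ha].
rewrite add0n subSS; apply: eq_bigr => d _ /=.
by rewrite subKn // -ltnS.
Qed.

Lemma unit_raw m (H : seq nat -> seq nat -> rat) :
  \sum_(b <- divs m) (if sumn b == 0%N then 1 else 0) * H b (sub m b) =
  H (nseq (size m) 0%N) m.
Proof.
elim: m H => [|x m IH] H; first by rewrite /= !big_cons !big_nil addr0 mul1r.
rewrite sum_divs_cons big_nat_recl // [X in _ + X]big1 ?addr0; last first.
  by move=> a _; apply: big1 => d _ /=; rewrite mul0r.
rewrite [RHS]/= -(IH (fun b c => H (0%N :: b) (x :: c))) /=; apply: eq_bigr => d _.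
by rewrite add0n sub_cons subn0.
Qed.


Definition cano (f : ps) := forall m, f m = f (strip m).
Definition C := {f : ps | cano f}.
HB.instance Definition _ := gen_eqMixin C.
HB.instance Definition _ := gen_choiceMixin C.

Definition cv (a : C) : seq nat -> rat := proj1_sig a.
Coercion cv : C >-> Funclass.

Lemma cvK (a : C) m : a (strip m) = a m.
Proof. by rewrite [RHS](proj2_sig a). Qed.

Lemma cv_inj (a b : C) : (forall m, a m = b m) -> a = b.
Proof.
case: a b => [f Hf] [g Hg] /= H.
have E : f = g by apply: functional_extensionality.
subst g; by rewrite (proof_irrelevance _ Hf Hg).
Qed.

Lemma canon_add f g : cano (ps_add f g).
Proof. by move=> m; rewrite /ps_add strip_idem. Qed.
Lemma canon_opp f : cano (ps_opp f).
Proof. by move=> m; rewrite /ps_opp strip_idem. Qed.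
Lemma canon_const c : cano (ps_const c).
Proof. by move=> m; rewrite /ps_const strip_idem. Qed.
Lemma canon_mul f g : cano (ps_mul f g).
Proof. by move=> m; rewrite /ps_mul strip_idem. Qed.

Definition cadd (a b : C) : C := exist _ _ (canon_add a b).
Definition copp (a : C) : C := exist _ _ (canon_opp a).
Definition cst (q : rat) : C := exist _ _ (canon_const q).
Definition cmul (a b : C) : C := exist _ _ (canon_mul a b).

Lemma ps_const_strip q m : ps_const q (strip m) = if sumn m == 0%N then q else 0.
Proof. by rewrite /ps_const strip_idem strip_nilP. Qed.

Lemma ps_mul_const q f m : ps_mul (ps_const q) f m = q * f (strip m).
Proof.
rewrite /ps_mul /=.
under eq_bigr => b _ do rewrite ps_const_strip.
have := unit_raw (strip m) (fun b c => q * f (strip c)).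
rewrite strip_idem => <-.
apply: eq_bigr => b _; case: ifP => _; by rewrite ?mul1r ?mul0r.
Qed.

Lemma caddA : associative cadd.
Proof. by move=> a b c; apply: cv_inj => m; rewrite /= /ps_add !strip_idem addrA. Qed.
Lemma caddC : commutative cadd.
Proof. by move=> a b; apply: cv_inj => m; rewrite /= /ps_add addrC. Qed.
Lemma cadd0 : left_id (cst 0) cadd.
Proof. by move=> a; apply: cv_inj => m; rewrite /= /ps_add ps_const_strip if_same add0r cvK. Qed.
Lemma caddN : left_inverse (cst 0) copp cadd.
Proof.
move=> a; apply: cv_inj => m; rewrite /= /ps_add /ps_opp strip_idem addNr.
by rewrite /ps_const; case: ifP.
Qed.

HB.instance Definition _ := GRing.isZmodule.Build C caddA caddC cadd0 caddN.

Lemma mul_valC (a b : C) x :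
  cmul a b x = \sum_(y <- divs (strip x)) a (strip y) * b (strip (sub (strip x) y)).
Proof. by []. Qed.

Lemma mul_valC' (a b : C) x :
  cmul a b (strip x) = \sum_(y <- divs x) a (strip y) * b (strip (sub x y)).
Proof.
rewrite mul_valC strip_idem.
exact: (conv_strip (fun y z => a y * b z)).
Qed.

Lemma cmulA : associative cmul.
Proof.
move=> a b c; apply: cv_inj => m; rewrite !mul_valC.
under eq_bigr => x _ do rewrite mul_valC' big_distrr /=.
under [RHS]eq_bigr => x _ do rewrite mul_valC' big_distrl /=.
have := assoc_raw (strip m) (fun x y z => a (strip x) * b (strip y) * c (strip z)).
rewrite /LS /RS => ->; apply: eq_bigr => x _; apply: eq_bigr => y _.
by rewrite mulrA.
Qed.

Lemma cmulC : commutative cmul.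
Proof.
move=> a b; apply: cv_inj => m; rewrite /= /ps_mul.
rewrite (comm_raw (strip m) (fun x y => a (strip x) * b (strip y))).
by apply: eq_bigr => x _; rewrite mulrC.
Qed.

Lemma cmul1 : left_id (cst 1) cmul.
Proof. by move=> a; apply: cv_inj => m; rewrite /= ps_mul_const mul1r cvK. Qed.

Lemma cmulDl : left_distributive cmul cadd.
Proof.
move=> a b c; apply: cv_inj => m; rewrite /= /ps_mul /ps_add !strip_idem -big_split /=.
by apply: eq_bigr => x _; rewrite !strip_idem mulrDl.
Qed.

Lemma cone_neq0 : cst 1 != cst 0.
Proof.
apply/eqP => H; have := congr1 (fun a : C => a [::]) H.
by rewrite /= /ps_const /=.
Qed.

HB.instance Definition _ := GRing.Zmodule_isComNzRing.Build C cmulA cmulC cmul1 cmulDl cone_neq0.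

Lemma cv_add (a b : C) : cv (a + b) = ps_add a b. Proof. by []. Qed.
Lemma cv_mul (a b : C) : cv (a * b) = ps_mul a b. Proof. by []. Qed.
Lemma cv_opp (a : C) : cv (- a) = ps_opp a. Proof. by []. Qed.
Lemma cv0 : cv 0 = ps_zero. Proof. by []. Qed.
Lemma cv1 : cv 1 = ps_one. Proof. by []. Qed.
Lemma cv_cst q : cv (cst q) = ps_const q. Proof. by []. Qed.
Lemma cv_sub (a b : C) : cv (a - b) = ps_sub a b. Proof. by []. Qed.

Lemma cstD p q : cst (p + q) = cst p + cst q.
Proof. apply: cv_inj => m; rewrite /= /ps_add !ps_const_strip /ps_const strip_nilP; by case: ifP; rewrite ?addr0. Qed.
Lemma cstM p q : cst (p * q) = cst p * cst q.
Proof. apply: cv_inj => m; rewrite /= ps_mul_const ps_const_strip /ps_const strip_nilP; by case: ifP; rewrite ?mulr0. Qed.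
Lemma cst0 : cst 0 = 0. Proof. by []. Qed.
Lemma cst1 : cst 1 = 1. Proof. by []. Qed.
Lemma cstN p : cst (- p) = - cst p.
Proof. by apply/eqP; rewrite -subr_eq0 opprK -cstD addNr. Qed.
Lemma cst_sum I (r : seq I) (P : pred I) (F : I -> rat) :
  cst (\sum_(i <- r | P i) F i) = \sum_(i <- r | P i) cst (F i).
Proof. exact: (big_morph cst cstD cst0). Qed.
Lemma cstX p n : cst (p ^+ n) = cst p ^+ n.
Proof. by elim: n => [|n IH]; rewrite ?expr0 ?cst1 // !exprS cstM IH. Qed.

Lemma scaleE q (a : C) : ps_scale q a = cv (cst q * a).
Proof. by apply: functional_extensionality => m; rewrite /= ps_mul_const. Qed.


Lemma cv_addE (a b : C) m : cv (a + b) m = a m + b m.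
Proof. by rewrite /= /ps_add !cvK. Qed.
Lemma cv_oppE (a : C) m : cv (- a) m = - a m.
Proof. by rewrite /= /ps_opp !cvK. Qed.
Lemma cv0E m : cv 0 m = 0.
Proof. by rewrite /= /ps_const; case: ifP. Qed.
Lemma cv_sumE I (r : seq I) (P : pred I) (F : I -> C) m :
  cv (\sum_(i <- r | P i) F i) m = \sum_(i <- r | P i) F i m.
Proof. exact: (big_morph (fun a : C => a m) (fun a b => cv_addE a b m) (cv0E m)). Qed.
Lemma cv_mulE (a b : C) m :
  cv (a * b) m = \sum_(y <- divs (strip m)) a (strip y) * b (strip (sub (strip m) y)).
Proof. by []. Qed.

Definition ordge (f : C) n := forall m, (sumn m < n)%N -> f m = 0.
Definition eqD D (f g : C) := forall m, (sumn m <= D)%N -> f m = g m.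

Lemma eqD_refl D f : eqD D f f. Proof. by []. Qed.
Lemma eqD_sym D f g : eqD D f g -> eqD D g f. Proof. by move=> H m Hm; rewrite H. Qed.
Lemma eqD_trans D f g h : eqD D f g -> eqD D g h -> eqD D f h.
Proof. by move=> H1 H2 m Hm; rewrite H1 // H2. Qed.
Lemma eqD_add D f f' g g' : eqD D f f' -> eqD D g g' -> eqD D (f + g) (f' + g').
Proof. by move=> H1 H2 m Hm; rewrite !cv_addE H1 // H2. Qed.
Lemma eqD_opp D f f' : eqD D f f' -> eqD D (- f) (- f').
Proof. by move=> H1 m Hm; rewrite !cv_oppE H1. Qed.
Lemma eqD_mul D f f' g g' : eqD D f f' -> eqD D g g' -> eqD D (f * g) (f' * g').
Proof.
move=> H1 H2 m Hm; rewrite !cv_mulE; apply: eq_big_seq => y Hy.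
have E := divs_sumn Hy; rewrite sumn_strip in E.
rewrite H1 ?H2 // sumn_strip; apply: leq_trans Hm; rewrite -E ?leq_addl ?leq_addr //.
Qed.
Lemma eqD_sum D I (r : seq I) (P : pred I) (F G : I -> C) :
  (forall i, P i -> eqD D (F i) (G i)) ->
  eqD D (\sum_(i <- r | P i) F i) (\sum_(i <- r | P i) G i).
Proof.
move=> H; apply: (big_ind2 (eqD D)) => //; exact: eqD_add.
Qed.
Lemma eqD_exp D f f' n : eqD D f f' -> eqD D (f ^+ n) (f' ^+ n).
Proof. by move=> H; elim: n => [|n IH] //; rewrite !exprS; apply: eqD_mul. Qed.
Lemma eq_eqD f g : (forall D, eqD D f g) -> f = g.
Proof. by move=> H; apply: cv_inj => m; apply: (H (sumn m)). Qed.
Lemma eqD_eq D f g : f = g -> eqD D f g. Proof. by move=> ->. Qed.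

Lemma ordge_eqD0 D f n : ordge f n -> (D < n)%N -> eqD D f 0.
Proof. by move=> H Hn m Hm; rewrite cv0E H //; apply: leq_ltn_trans Hn. Qed.
Lemma ordge0 f : ordge f 0. Proof. by []. Qed.
Lemma ordge_le f n n' : ordge f n -> (n' <= n)%N -> ordge f n'.
Proof. by move=> H Hn m Hm; apply: H; apply: leq_trans Hn. Qed.
Lemma ordge_add f g n : ordge f n -> ordge g n -> ordge (f + g) n.
Proof. by move=> H1 H2 m Hm; rewrite cv_addE H1 // H2 // addr0. Qed.
Lemma ordge_opp f n : ordge f n -> ordge (- f) n.
Proof. by move=> H1 m Hm; rewrite cv_oppE H1 // oppr0. Qed.
Lemma ordge_sum I (r : seq I) (P : pred I) (F : I -> C) n :
  (forall i, P i -> ordge (F i) n) -> ordge (\sum_(i <- r | P i) F i) n.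
Proof.
move=> H; apply: (big_ind (fun x => ordge x n)) => //.
  by move=> m _; rewrite cv0E.
by move=> x y; apply: ordge_add.
Qed.
Lemma ordge_mul f g p q : ordge f p -> ordge g q -> ordge (f * g) (p + q).
Proof.
move=> H1 H2 m Hm; rewrite cv_mulE big1_seq // => y /andP[_ Hy].
have E := divs_sumn Hy; rewrite sumn_strip in E.
case: (ltnP (sumn y) p) => Hp; first by rewrite H1 ?mul0r // sumn_strip.
rewrite H2 ?mulr0 // sumn_strip.
by rewrite -(ltn_add2l (sumn y)) E; apply: leq_trans Hm _; rewrite leq_add2r.
Qed.
Lemma ordge_mulr f g q : ordge g q -> ordge (f * g) q.
Proof. by move=> H; rewrite -[q]add0n; apply: ordge_mul. Qed.
Lemma ordge_mull f g q : ordge f q -> ordge (f * g) q.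
Proof. by move=> H; rewrite -[q]addn0; apply: ordge_mul. Qed.
Lemma ordge_exp f p n : ordge f p -> ordge (f ^+ n) (p * n).
Proof.
move=> H; elim: n => [|n IH]; first by rewrite muln0; exact: ordge0.
by rewrite exprS mulnS; apply: ordge_mul.
Qed.
Lemma ordge_exp1 f n : ordge f 1 -> ordge (f ^+ n) n.
Proof. by move=> H; have := @ordge_exp f 1 n H; rewrite mul1n. Qed.

Lemma psum_val (F : nat -> ps) m N :
  (forall n, (N <= n)%N -> F n (strip m) = 0) ->
  ps_sum F m = \sum_(n < N) F n (strip m).
Proof.
move=> H; rewrite /ps_sum.
set c := \sum_(n < N) F n (strip m).
have Pc : exists N0, forall N', (N0 <= N')%N -> \sum_(n < N') F n (strip m) = c.
  exists N => N' HN; rewrite /c (big_ord_widen_cond N' (fun _ => true) (fun n => F n (strip m)) HN).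
  rewrite (bigID (fun i : 'I_N' => (i < N)%N)) /= [X in _ + X]big1 ?addr0 //.
  by move=> i /negbTE Hi; rewrite H // leqNgt Hi.
pose P := fun c : rat => exists N, forall N', (N <= N')%N -> \sum_(n < N') F n (strip m) = c.
have [N1 HN1] : P (epsilon (inhabits 0) P) by apply: epsilon_spec; exists c.
have [N0 HN0] := Pc.
rewrite -(HN1 (maxn N0 N1)) ?leq_maxr // (HN0 (maxn N0 N1)) // leq_maxl.
by [].
Qed.

Lemma canon_sum F : cano (ps_sum F).
Proof. by move=> m; rewrite /ps_sum strip_idem. Qed.

Definition SumC (G : nat -> C) : C := exist _ _ (canon_sum (fun n => cv (G n))).

Lemma SumC_eqD D N (G : nat -> C) :
  (forall n, (N <= n)%N -> eqD D (G n) 0) -> eqD D (SumC G) (\sum_(n < N) G n).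
Proof.
move=> H m Hm; rewrite cv_sumE /= (@psum_val _ m N).
  by apply: eq_bigr => i _; rewrite cvK.
by move=> n Hn; rewrite (H n Hn) ?cv0E // sumn_strip.
Qed.

Lemma SumC_ord D N (G : nat -> C) : (D < N)%N ->
  (forall n, ordge (G n) n) -> eqD D (SumC G) (\sum_(n < N) G n).
Proof.
move=> HN H; apply: SumC_eqD => n Hn; apply: (ordge_eqD0 (H n)).
exact: leq_trans HN Hn.
Qed.

Lemma SumC_ext (F G : nat -> C) : (forall n, F n = G n) -> SumC F = SumC G.
Proof. by move=> H; have -> : F = G by apply: functional_extensionality. Qed.

Lemma ps_pow_cv (a : C) n : ps_pow (cv a) n = cv (a ^+ n).
Proof. by elim: n => [|n IH] //; rewrite exprS /= IH. Qed.

Lemma big_psE I (r : seq I) (P : pred I) (F : I -> C) :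
  \big[ps_add/ps_zero]_(i <- r | P i) cv (F i) = cv (\sum_(i <- r | P i) F i).
Proof.
elim: r => [|x r IH]; first by rewrite !big_nil.
by rewrite !big_cons; case: (P x); rewrite IH.
Qed.

Lemma canon_strip (f : ps) : cano (fun m => f (strip m)).
Proof. by move=> m; rewrite strip_idem. Qed.
Definition canonize (f : ps) : C := exist _ _ (canon_strip f).

Lemma ps_mul_canon f g : ps_mul f g = ps_mul (cv (canonize f)) g.
Proof.
apply: functional_extensionality => m; rewrite /ps_mul /=.
by apply: eq_bigr => y _; rewrite strip_idem.
Qed.

Lemma ps_pow_canon f n : ps_pow f n = cv (canonize f ^+ n).
Proof.
rewrite -ps_pow_cv; elim: n => [|n IH] //=.
by rewrite ps_mul_canon /= -IH.
Qed.

Lemma canon_var j : cano (ps_var j).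
Proof. by move=> m; rewrite /ps_var strip_idem. Qed.
Definition T k : C := exist _ _ (canon_var (2 * k)).
Definition S k : C := exist _ _ (canon_var (2 * k).+1).
Lemma tvE k : tv k = cv (T k). Proof. by []. Qed.
Lemma svE k : sv k = cv (S k). Proof. by []. Qed.
Lemma ttvE n : ttv n = cv (if n == 1%N then T 1 - 1 else T n).
Proof. by rewrite /ttv; case: (n == 1%N). Qed.


Lemma natr_neq0 n : (0 < n)%N -> (n%:R : rat) != 0.
Proof. by move=> H; rewrite pnatr_eq0 -lt0n. Qed.
Lemma fact_neq0 n : (n`!%:R : rat) != 0.
Proof. exact/natr_neq0/fact_gt0. Qed.
Lemma invnM a b : invn (a * b) = invn a * invn b.
Proof. by rewrite /invn natrM invfM. Qed.
Lemma sgnD a b : sgn (a + b) = sgn a * sgn b.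
Proof. by rewrite /sgn exprD. Qed.
Lemma sgnS a : sgn a.+1 = - sgn a.
Proof. by rewrite /sgn exprS mulN1r. Qed.
Lemma invn1 : invn 1 = 1. Proof. by rewrite /invn invr1. Qed.

Lemma binv n i : (i <= n)%N -> invn i`! * invn (n - i)`! = 'C(n, i)%:R * invn n`!.
Proof.
move=> H; rewrite /invn -(bin_fact H) !natrM !invfM [RHS]mulrA mulfV ?mul1r //.
by apply: natr_neq0; rewrite bin_gt0.
Qed.

Lemma S1 s : \sum_(0 <= n < s.+1) sgn n * invn n`! * invn (s - n)`! =
  (if s == 0%N then 1 else 0).
Proof.
transitivity (invn s`! * (1 - 1 : rat) ^+ s).
  rewrite exprBn big_mkord mulr_sumr; apply: eq_bigr => i _.
  rewrite [1 ^+ (s - i)]expr1n [1 ^+ i]expr1n !mulr1 -mulrA binv; last by rewrite -ltnS.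
  by rewrite -mulr_natr /sgn; ring.
rewrite subrr expr0n; case: (s =P 0%N) => [->|_]; last by rewrite mulr0.
by rewrite mulr1 /invn invr1.
Qed.

Definition ee n := sgn n * invn (2 ^ n * n`!).
Definition aa j := invn (dfact (2 * j + 1)).
Definition cc s := \sum_(0 <= n < s.+1) ee n * aa (s - n).

Lemma dfact_gt0 n : (0 < dfact n)%N.
Proof.
elim: n {-2}n (leqnn n) => [|k IH] [|[|n]] //= Hn.
by rewrite muln_gt0 IH // ltnW.
Qed.

Lemma aaS j : aa j.+1 * ((2 * j + 3)%:R) = aa j.
Proof.
have E : (2 * j.+1 + 1 = (2 * j + 1).+2)%N by lia.
have E2 : ((2 * j + 1).+2 = 2 * j + 3)%N by lia.
rewrite /aa E /= E2 /invn natrM invfM mulrAC mulVf ?mul1r //.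
by apply: natr_neq0; lia.
Qed.

Lemma eeS n : ee n.+1 * ((2 * n.+1)%:R) = - ee n.
Proof.
rewrite /ee sgnS /invn expnS factS.
have h1 : ((2 ^ n)%:R : rat) != 0 by apply: natr_neq0; rewrite expn_gt0.
have h2 := fact_neq0 n.
have h3 : (n.+1%:R : rat) != 0 by apply: natr_neq0.
have h4 : (2%:R : rat) != 0 by apply: natr_neq0.
rewrite !natrM !invfM.
field; move: h3; rewrite -natr1 addrC => h3; by rewrite h1 h2 h3.
Qed.

Lemma cc_mul s : cc s * (2 * s + 1)%:R = ee s.
Proof.
case: s => [|S].
  have A0 : aa 0 = 1 by rewrite /aa muln0 add0n /= invn1.
  by rewrite /cc big_nat1 subnn A0 mulr1.
rewrite /cc mulr_suml.
have sp : forall n, (n < S.+2)%N -> ((2 * S.+1 + 1)%:R : rat) = (2 * (S.+1 - n) + 1)%:R + (2 * n)%:R.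
  by move=> n Hn; rewrite -natrD; congr (_%:R); lia.
rewrite (@eq_big_nat _ _ _ 0 S.+2 _ (fun n => ee n * aa (S.+1 - n) * (2 * (S.+1 - n) + 1)%:R + ee n * aa (S.+1 - n) * (2 * n)%:R)); last first.
  by move=> n /andP[_ Hn]; rewrite (sp n Hn) mulrDr.
rewrite big_split /= big_nat_recr //= [X in _ + X]big_nat_recl //=.
rewrite subnn /= mulr0 add0r.
have -> : \sum_(0 <= i < S.+1) ee i * aa (S.+1 - i) * (2 * (S.+1 - i) + 1)%:R
        = \sum_(0 <= i < S.+1) ee i * aa (S - i).
  apply: eq_big_nat => n /andP[_ Hn].
  have E1 : (S.+1 - n = (S - n).+1)%N by lia.
  have E2 : (2 * (S - n).+1 + 1 = 2 * (S - n) + 3)%N by lia.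
  by rewrite E1 E2 -mulrA aaS.
have -> : \sum_(0 <= i < S.+1) ee i.+1 * aa (S.+1 - i.+1) * (2 * i.+1)%:R
        = - \sum_(0 <= i < S.+1) ee i * aa (S - i).
  rewrite -sumrN; apply: eq_big_nat => n /andP[_ Hn].
  by rewrite subSS mulrAC eeS mulNr.
rewrite /aa /= invn1 mulr1 mulr1.
by rewrite addrAC addrN add0r.
Qed.

Lemma S3 s : cc s = sgn s * invn (2 ^ s * s`! * (2 * s + 1)).
Proof.
have -> : sgn s * invn (2 ^ s * s`! * (2 * s + 1)) = ee s * invn (2 * s + 1).
  by rewrite /ee invnM mulrA.
by rewrite -cc_mul /invn mulfK //; apply: natr_neq0; lia.
Qed.


Definition conv (x y : nat -> C) s := \sum_(0 <= n < s.+1) x n * y (s - n)%N.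

Lemma conv_comm x y s : conv x y s = conv y x s.
Proof.
rewrite /conv big_nat_rev; apply: eq_big_nat => n /andP[_ Hn].
rewrite add0n subSS subKn; [by rewrite mulrC | lia].
Qed.

Lemma conv_assoc x y z s : conv (conv x y) z s = conv x (conv y z) s.
Proof.
rewrite /conv.
under eq_bigr => a _ do rewrite big_distrl /=.
under [RHS]eq_bigr => b _ do rewrite big_distrr /=.
have := tri3 (fun b c d => x b * y c * z d) s.
move=> ->; apply: eq_bigr => b _; apply: eq_bigr => c _; by rewrite mulrA.
Qed.

Lemma conv_fun_comm x y : conv x y = conv y x.
Proof. apply: functional_extensionality => s; exact: conv_comm. Qed.
Lemma conv_fun_assoc x y z : conv (conv x y) z = conv x (conv y z).
Proof. apply: functional_extensionality => s; exact: conv_assoc. Qed.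

Lemma conv_swap a b c d : conv (conv a b) (conv c d) = conv (conv a c) (conv b d).
Proof.
by rewrite !conv_fun_assoc -(conv_fun_assoc b c d) (conv_fun_comm b c) conv_fun_assoc.
Qed.

Definition delta (n : nat) : C := if n == 0%N then 1 else 0.

Lemma conv_delta x s : conv x delta s = x s.
Proof.
rewrite /conv big_nat_recr //= subnn /delta eqxx mulr1 big1_seq ?add0r //.
move=> n /andP[_]; rewrite mem_index_iota => /andP[_ Hn].
have -> : (s - n == 0)%N = false by apply/negbTE; lia.
by rewrite mulr0.
Qed.

Lemma conv_oppl x y s : conv (fun n => - x n) y s = - conv x y s.
Proof. by rewrite /conv -sumrN; apply: eq_bigr => n _; rewrite mulNr. Qed.

Lemma cst_nat k : cst k%:R = k%:R.
Proof. by elim: k => [|k IH] //; rewrite -natr1 cstD IH cst1 natr1. Qed.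

Section Seqs.
Variables (V R : C).

Definition eV n := cst (invn n`!) * V ^+ n.
Definition eNV n := cst (sgn n * invn n`!) * V ^+ n.
Definition AA j := cst (aa j) * R ^+ (2 * j + 1).
Definition Bn j := cst (sgn j * invn (2 ^ j * j`! * (2 * j + 1))) * R ^+ (2 * j + 1).
Definition eNH n := cst (ee n) * R ^+ (2 * n).
Definition eNW n := cst (sgn n * invn n`!) * (V + cst (invn 2) * R ^+ 2) ^+ n.
Definition Pc n := \sum_(i < n.+1)
   cst (invn (i`! * dfact (2 * n - 2 * i + 1))) * (V ^+ i * R ^+ (2 * n - 2 * i + 1)).
Definition Qc n := \sum_(i < n.+1)
   cst (sgn n.+1 * invn (2 ^ (n - i) * i`! * (n - i)`! * (2 * n - 2 * i + 1)))
     * (V ^+ i * R ^+ (2 * n - 2 * i + 1)).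

Lemma eNV_eV s : conv eNV eV s = delta s.
Proof.
transitivity (cst (\sum_(0 <= n < s.+1) sgn n * invn n`! * invn (s - n)`!) * V ^+ s).
  rewrite cst_sum mulr_suml; apply: eq_big_nat => n /andP[_ Hn].
  rewrite /eNV /eV !cstM.
  have -> : V ^+ s = V ^+ n * V ^+ (s - n) by rewrite -exprD subnKC //; lia.
  ring.
rewrite S1 /delta; case: (s =P 0%N) => [->|_].
  by rewrite cst1 mul1r expr0.
by change (cst 0) with (0 : C); rewrite mul0r.
Qed.

Lemma eNH_A s : conv eNH AA s = Bn s.
Proof.
rewrite /Bn -S3 /cc cst_sum mulr_suml /conv; apply: eq_big_nat => n /andP[_ Hn].
rewrite /eNH /AA !cstM.
have -> : R ^+ (2 * s + 1) = R ^+ (2 * n) * R ^+ (2 * (s - n) + 1) by rewrite -exprD; congr (_ ^+ _); lia.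
ring.
Qed.

Lemma PcE n : Pc n = conv eV AA n.
Proof.
rewrite /Pc /conv big_mkord; apply: eq_bigr => i _.
have Hi := ltn_ord i.
have E : (2 * n - 2 * i + 1 = 2 * (n - i) + 1)%N by lia.
rewrite E invnM /eV /AA /aa !cstM; ring.
Qed.

Lemma QcE n : Qc n = - conv eNV Bn n.
Proof.
rewrite /Qc /conv big_mkord -sumrN; apply: eq_bigr => i _.
have Hi := ltn_ord i.
have E : (2 * n - 2 * i + 1 = 2 * (n - i) + 1)%N by lia.
have E2 : (2 ^ (n - i) * i`! * (n - i)`! * (2 * (n - i) + 1) = i`! * (2 ^ (n - i) * (n - i)`! * (2 * (n - i) + 1)))%N by lia.
have E3 : sgn n.+1 = - (sgn i * sgn (n - i)) by rewrite sgnS -sgnD subnKC //; lia.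
rewrite E E2 invnM E3 /eNV /Bn !cstM cstN !cstM; ring.
Qed.

Lemma eNWE n : eNW n = conv eNH eNV n.
Proof.
rewrite /eNW /conv exprDn big_mkord mulr_sumr; apply: eq_bigr => i _.
have Hi := ltn_ord i.
rewrite -mulr_natr -cst_nat exprMn -cstX -exprM.
have E1 : sgn n = sgn i * sgn (n - i) by rewrite -sgnD subnKC //; lia.
have E2 : invn n`! * 'C(n, i)%:R = invn i`! * invn (n - i)`!.
  by rewrite mulrC (binv (n := n)) //; lia.
have E3 : invn 2 ^+ i = invn (2 ^ i) by rewrite /invn natrX exprVn.
transitivity (cst (sgn n * (invn n`! * 'C(n, i)%:R) * invn 2 ^+ i) * (R ^+ (2 * i) * V ^+ (n - i))).
  rewrite !cstM; ring.
rewrite E1 E2 E3 /eNH /eNV /ee invnM !cstM; ring.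
Qed.

End Seqs.

Lemma key_s V R s : conv (eNW V R) (Pc V R) s + conv (Qc V R) (eV V) s = 0.
Proof.
have h1 : eNW V R = conv (eNV V) (eNH R).
  by apply: functional_extensionality => n; rewrite eNWE conv_comm.
have h2 : Pc V R = conv (eV V) (AA R).
  by apply: functional_extensionality => n; rewrite PcE.
have h3 : Qc V R = fun n => - conv (eNV V) (Bn R) n.
  by apply: functional_extensionality => n; rewrite QcE.
have h4 : conv (eNV V) (eV V) = delta.
  by apply: functional_extensionality => n; rewrite eNV_eV.
have h5 : conv (eNH R) (AA R) = Bn R.
  by apply: functional_extensionality => n; rewrite eNH_A.
rewrite h1 h2 h3 conv_oppl conv_swap h4 h5 conv_comm conv_delta.
rewrite conv_fun_assoc (conv_fun_comm (Bn R) (eV V)) -conv_fun_assoc h4.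
by rewrite conv_comm conv_delta addrN.
Qed.


Lemma eqD_sum_nat D a b (F G : nat -> C) :
  (forall i, (a <= i < b)%N -> eqD D (F i) (G i)) ->
  eqD D (\sum_(a <= i < b) F i) (\sum_(a <= i < b) G i).
Proof.
move=> H; rewrite big_nat_cond [X in eqD _ _ X]big_nat_cond.
apply: eqD_sum => i /andP[Hi _]; exact: H.
Qed.

Lemma eqD_sum0_nat D a b (F : nat -> C) :
  (forall i, (a <= i < b)%N -> eqD D (F i) 0) -> eqD D (\sum_(a <= i < b) F i) 0.
Proof.
move=> H; apply: eqD_trans (eqD_sum_nat H) _.
by rewrite big1 //; apply: eqD_refl.
Qed.

Lemma tri2 {R : zmodType} (X : nat -> nat -> R) N :
  \sum_(0 <= n < N) \sum_(0 <= m < N - n) X n m =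
  \sum_(0 <= s < N) \sum_(0 <= n < s.+1) X n (s - n)%N.
Proof.
elim: N => [|N IH]; first by rewrite !big_geq.
rewrite [RHS]big_nat_recr //= -IH.
rewrite (@eq_big_nat _ _ _ 0 N.+1 _ (fun n => \sum_(0 <= m < N - n) X n m + X n (N - n)%N)); last first.
  move=> n /andP[_ Hn]; have -> : (N.+1 - n = (N - n).+1)%N by lia.
  by rewrite big_nat_recr.
by rewrite big_split /= big_nat_recr //= subnn [X in _ + X + _]big_geq // addr0.
Qed.

Lemma dbl D N (X : nat -> nat -> C) : (D < N)%N ->
  (forall n m, ordge (X n m) (n + m)) ->
  eqD D (\sum_(0 <= n < N) \sum_(0 <= m < N) X n m)
        (\sum_(0 <= s < N) \sum_(0 <= n < s.+1) X n (s - n)%N).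
Proof.
move=> HN HX; rewrite -tri2; apply: eqD_sum_nat => n /andP[_ Hn].
rewrite (@big_cat_nat _ _ _ (N - n) 0 N) //=; last by lia.
rewrite -[X in eqD _ _ X]addr0; apply: eqD_add; first exact: eqD_refl.
apply: eqD_sum0_nat => m /andP[Hm _].
apply: (ordge_eqD0 (HX n m)); lia.
Qed.


Lemma SumC_cv G : cv (SumC G) = ps_sum (fun n => cv (G n)).
Proof. by []. Qed.

Lemma ordge_canon (f : ps) : f [::] = 0 -> ordge (canonize f) 1.
Proof.
move=> H m Hm; rewrite /= (_ : strip m = [::]) //; apply/eqP.
by rewrite strip_nilP; move: Hm; rewrite ltnS leqn0.
Qed.

Section Conv.
Variables (v r : ps).
Let V := canonize v.
Let Rr := canonize r.
Let W := V + cst (invn 2) * Rr ^+ 2.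

Definition II k := SumC (fun n => cst (invn n`!) * (T (n + k) * V ^+ n)).
Definition JJ k := SumC (fun n => T (n + k).+1 * Pc V Rr n)
                 + SumC (fun n => cst (invn n`!) * (S (n + k) * W ^+ n)).
Definition TT n := if n == 1%N then T 1 - 1 else T n.

Lemma wvrE : wvr v r = cv W.
Proof.
rewrite /wvr ps_pow_canon scaleE; apply: functional_extensionality => m.
by rewrite /W /V /= /ps_add /= strip_idem.
Qed.

Lemma PnE n : Pn v r n = cv (Pc V Rr n).
Proof.
rewrite /Pn /Pc -big_psE; apply: eq_bigr => i _.
by rewrite !ps_pow_canon -cv_mul scaleE.
Qed.

Lemma IkE k : Ik v k = cv (II k).
Proof.
rewrite /Ik /II SumC_cv; congr ps_sum; apply: functional_extensionality => n.
by rewrite ps_pow_canon tvE -cv_mul scaleE.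
Qed.

Lemma JkE k : Jk v r k = cv (JJ k).
Proof.
rewrite /Jk /JJ cv_add !SumC_cv; congr ps_add; congr ps_sum;
  apply: functional_extensionality => n.
  by rewrite PnE tvE -cv_mul.
by rewrite wvrE ps_pow_cv svE -cv_mul scaleE.
Qed.

Lemma EL1E : EL1 v -> SumC (fun n => cst (invn n`!) * (TT n * V ^+ n)) = 0.
Proof.
rewrite /EL1 => H; apply: cv_inj => m; rewrite SumC_cv cv0 -H; congr (ps_sum _ m).
apply: functional_extensionality => n.
by rewrite ps_pow_canon ttvE -cv_mul scaleE.
Qed.

Lemma EL2E : EL2 v r ->
  SumC (fun n => TT n.+1 * Pc V Rr n) + SumC (fun n => cst (invn n`!) * (S n * W ^+ n)) = 0.
Proof.
rewrite /EL2 => H; apply: cv_inj => m; rewrite cv_add !SumC_cv cv0 -H; congr (ps_add _ _ m).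
  congr ps_sum; apply: functional_extensionality => n.
  by rewrite PnE ttvE -cv_mul.
congr ps_sum; apply: functional_extensionality => n.
by rewrite wvrE ps_pow_cv svE -cv_mul scaleE.
Qed.

Lemma t_invE k : t_inv v k =
  cv (SumC (fun n => cst (sgn n * invn n`!) * (II 0 ^+ n * II (n + k)))).
Proof.
rewrite /t_inv SumC_cv; congr ps_sum; apply: functional_extensionality => n.
by rewrite !IkE ps_pow_cv -cv_mul scaleE.
Qed.

Lemma s_invE k : s_inv v r k =
  cv (SumC (fun n => \sum_(i < n.+1)
         cst (sgn n.+1 * invn (2 ^ (n - i) * i`! * (n - i)`! * (2 * n - 2 * i + 1)))
           * ((II 0 ^+ i * JJ 0 ^+ (2 * n - 2 * i + 1)) * II (n + k).+1))
    + SumC (fun n => cst (sgn n * invn n`!)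
         * ((II 0 + cst (invn 2) * JJ 0 ^+ 2) ^+ n * JJ (n + k)))).
Proof.
rewrite /s_inv cv_add !SumC_cv; congr ps_add; congr ps_sum;
  apply: functional_extensionality => n.
  rewrite -big_psE; apply: eq_bigr => i _.
  by rewrite !IkE JkE !ps_pow_cv -!cv_mul scaleE.
by rewrite !IkE !JkE ps_pow_cv scaleE -cv_add ps_pow_cv -cv_mul scaleE.
Qed.

End Conv.


Lemma SumC_nat D N (G : nat -> C) : (D < N)%N ->
  (forall n, ordge (G n) n) -> eqD D (SumC G) (\sum_(0 <= n < N) G n).
Proof. by move=> HN H; rewrite big_mkord; apply: SumC_ord. Qed.

Lemma tcore D N (Wt : C) (Y : nat -> C) : (D < N)%N -> ordge Wt 1 ->
  eqD D (\sum_(0 <= n < N) \sum_(0 <= m < N) eNV Wt n * (cst (invn m`!) * (Y (m + n)%N * Wt ^+ m)))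
        (Y 0%N).
Proof.
move=> HN hW; apply: eqD_trans (dbl HN _) _.
  move=> n m; apply: ordge_mul; first exact/ordge_mulr/ordge_exp1.
  exact/ordge_mulr/ordge_mulr/ordge_exp1.
apply: eqD_eq.
transitivity (\sum_(0 <= s < N) delta s * Y s); last first.
  case: N HN => [//|N] _; rewrite big_nat_recl // big1 ?addr0 /delta //= ?mul1r //.
  by move=> i _; rewrite mul0r.
apply: eq_big_nat => s _; rewrite -(eNV_eV Wt) /conv mulr_suml.
apply: eq_big_nat => n /andP[_ Hn]; rewrite subnK; last by lia.
rewrite /eV; ring.
Qed.

Section Main.
Variables (v r : ps).
Hypotheses (hv : v [::] = 0) (hr : r [::] = 0).
Let V := canonize v.
Let Rr := canonize r.
Let W := V + cst (invn 2) * Rr ^+ 2.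

Let hV : ordge V 1. Proof. exact: ordge_canon. Qed.
Let hR : ordge Rr 1. Proof. exact: ordge_canon. Qed.
Let hW : ordge W 1.
Proof.
apply: ordge_add => //; apply: ordge_mulr; apply: (ordge_le (@ordge_exp Rr 1 2 hR)); by [].
Qed.

Lemma ordge_VR n i : (i <= n)%N -> ordge (V ^+ i * Rr ^+ (2 * n - 2 * i + 1)) n.
Proof.
move=> Hi; apply: (@ordge_le _ (i + (2 * n - 2 * i + 1))); last by lia.
exact: ordge_mul (ordge_exp1 hV) (ordge_exp1 hR).
Qed.

Lemma ordge_Pc n : ordge (Pc V Rr n) n.
Proof.
apply: ordge_sum => i _; apply: ordge_mulr; apply: ordge_VR; exact/ltnSE/ltn_ord.
Qed.

Lemma ordge_Qc n : ordge (Qc V Rr n) n.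
Proof.
apply: ordge_sum => i _; apply: ordge_mulr; apply: ordge_VR; exact/ltnSE/ltn_ord.
Qed.

Lemma II0E : EL1 v -> II v 0 = V.
Proof.
move=> /EL1E H; apply: eq_eqD => D.
have e1 : eqD D (II v 0) (\sum_(0 <= n < D.+2) cst (invn n`!) * (T (n + 0) * V ^+ n)).
  apply: SumC_nat => // n; exact/ordge_mulr/ordge_mulr/ordge_exp1.
have e2 : eqD D (SumC (fun n => cst (invn n`!) * (TT n * V ^+ n)))
             (\sum_(0 <= n < D.+2) cst (invn n`!) * (TT n * V ^+ n)).
  apply: SumC_nat => // n; exact/ordge_mulr/ordge_mulr/ordge_exp1.
rewrite H in e2.
apply: eqD_trans e1 _.
have -> : \sum_(0 <= n < D.+2) cst (invn n`!) * (T (n + 0) * V ^+ n)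
   = \sum_(0 <= n < D.+2) cst (invn n`!) * (TT n * V ^+ n) + V.
  apply/eqP; rewrite -subr_eq0 opprD addrA -sumrB subr_eq0; apply/eqP.
  rewrite big_nat_recl // big_nat_recl // big1 ?addr0.
    by rewrite /TT /= !addn0 subrr add0r (_ : 1`! = 1%N) // invn1 cst1 !mul1r expr1; ring.
  by move=> i _; rewrite /TT /= addn0 subrr.
rewrite -[X in eqD _ _ X]add0r; apply: eqD_add; last exact: eqD_refl.
exact: eqD_sym.
Qed.

Lemma Pc0 : Pc V Rr 0 = Rr.
Proof.
rewrite /Pc big_ord1 /= muln0 subnn add0n expr0 expr1 mul1r.
by rewrite (_ : (0`! * 1 = 1)%N) // invn1 cst1 mul1r.
Qed.

Lemma JJ0E : EL2 v r -> JJ v r 0 = Rr.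
Proof.
move=> /EL2E H.
have E : JJ v r 0 = SumC (fun n => T (n + 0).+1 * Pc V Rr n) - SumC (fun n => TT n.+1 * Pc V Rr n).
  rewrite /JJ -[LHS]subr0 -H.
  have -> : SumC (fun n => cst (invn n`!) * (S (n + 0) * W ^+ n)) =
            SumC (fun n => cst (invn n`!) * (S n * W ^+ n)).
    by apply: SumC_ext => n; rewrite addn0.
  rewrite /W /V /Rr; ring.
apply: eq_eqD => D; rewrite E.
have e1 : eqD D (SumC (fun n => T (n + 0).+1 * Pc V Rr n))
                (\sum_(0 <= n < D.+1) T (n + 0).+1 * Pc V Rr n).
  by apply: SumC_nat => // n; apply/ordge_mulr/ordge_Pc.
have e2 : eqD D (SumC (fun n => TT n.+1 * Pc V Rr n))
                (\sum_(0 <= n < D.+1) TT n.+1 * Pc V Rr n).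
  by apply: SumC_nat => // n; apply/ordge_mulr/ordge_Pc.
apply: eqD_trans (eqD_add e1 (eqD_opp e2)) _; apply: eqD_eq.
rewrite -sumrB big_nat_recl // big1 ?addr0.
  by rewrite /TT /= Pc0; ring.
by move=> i _; rewrite /TT /= addn0 subrr.
Qed.

Lemma t_part k : EL1 v -> tv k = t_inv v k.
Proof.
move=> h1; rewrite t_invE tvE II0E //; congr cv.
apply: eq_eqD => D; apply: eqD_sym.
have e1 : eqD D (SumC (fun n => cst (sgn n * invn n`!) * (V ^+ n * II v (n + k))))
   (\sum_(0 <= n < D.+1) cst (sgn n * invn n`!) * (V ^+ n * II v (n + k))).
  by apply: SumC_nat => // n; apply/ordge_mulr/ordge_mull/ordge_exp1.
apply: eqD_trans e1 _.
have e2 : eqD D (\sum_(0 <= n < D.+1) cst (sgn n * invn n`!) * (V ^+ n * II v (n + k)))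
   (\sum_(0 <= n < D.+1) cst (sgn n * invn n`!) * (V ^+ n *
       \sum_(0 <= m < D.+1) cst (invn m`!) * (T (m + (n + k)) * V ^+ m))).
  apply: eqD_sum_nat => n _; apply: eqD_mul; first exact: eqD_refl.
  apply: eqD_mul; first exact: eqD_refl.
  by apply: SumC_nat => // m; apply/ordge_mulr/ordge_mulr/ordge_exp1.
apply: eqD_trans e2 _.
apply: (@eqD_trans _ _ (\sum_(0 <= n < D.+1) \sum_(0 <= m < D.+1)
   eNV V n * (cst (invn m`!) * ((fun j => T (j + k)) (m + n)%N * V ^+ m)))); last first.
  exact: (tcore (fun j => T (j + k)) (ltnSn D) hV).
apply: eqD_eq; apply: eq_big_nat => n _; rewrite !mulr_sumr; apply: eq_big_nat => m _.
by rewrite /= addnA /eNV; ring.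
Qed.

Lemma s_part k : EL1 v -> EL2 v r -> sv k = s_inv v r k.
Proof.
move=> h1 h2; rewrite s_invE svE II0E // JJ0E //; congr cv.
have -> : SumC (fun n => \sum_(i < n.+1)
         cst (sgn n.+1 * invn (2 ^ (n - i) * i`! * (n - i)`! * (2 * n - 2 * i + 1)))
           * ((V ^+ i * Rr ^+ (2 * n - 2 * i + 1)) * II v (n + k).+1))
   = SumC (fun n => Qc V Rr n * II v (n + k).+1).
  apply: SumC_ext => n; rewrite /Qc mulr_suml; apply: eq_bigr => i _; by rewrite mulrA.
apply: eq_eqD => D; apply: eqD_sym.
set N := D.+1.
have HN : (D < N)%N by [].
have e1 : eqD D (SumC (fun n => Qc V Rr n * II v (n + k).+1))
  (\sum_(0 <= s < N) conv (Qc V Rr) (eV V) s * T (s + k).+1).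
  apply: eqD_trans (SumC_nat HN _) _.
    by move=> n; apply/ordge_mull/ordge_Qc.
  apply: (@eqD_trans _ _ (\sum_(0 <= n < N) \sum_(0 <= m < N)
      Qc V Rr n * (cst (invn m`!) * (T (m + (n + k).+1) * V ^+ m)))).
    apply: eqD_sum_nat => n _; rewrite -mulr_sumr; apply: eqD_mul; first exact: eqD_refl.
    by apply: SumC_nat => // m; apply/ordge_mulr/ordge_mulr/ordge_exp1.
  apply: eqD_trans (dbl HN _) _.
    move=> n m; apply: ordge_mul; first exact: ordge_Qc.
    exact/ordge_mulr/ordge_mulr/ordge_exp1.
  apply: eqD_eq; apply: eq_big_nat => s _; rewrite /conv mulr_suml.
  apply: eq_big_nat => n /andP[_ Hn].
  have -> : (s - n + (n + k).+1 = (s + k).+1)%N by lia.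
  by rewrite /eV; ring.
have e2 : eqD D (SumC (fun n => cst (sgn n * invn n`!) * ((V + cst (invn 2) * Rr ^+ 2) ^+ n * JJ v r (n + k))))
  (\sum_(0 <= s < N) conv (eNW V Rr) (Pc V Rr) s * T (s + k).+1 + S k).
  apply: eqD_trans (SumC_nat HN _) _.
    by move=> n; apply/ordge_mulr/ordge_mull/ordge_exp1.
  apply: (@eqD_trans _ _ (\sum_(0 <= n < N) \sum_(0 <= m < N)
      eNW V Rr n * (T (m + (n + k)).+1 * Pc V Rr m) +
      \sum_(0 <= n < N) \sum_(0 <= m < N)
      eNV W n * (cst (invn m`!) * ((fun j => S (j + k)) (m + n)%N * W ^+ m)))).
    apply: (@eqD_trans _ _ (\sum_(0 <= n < N) cst (sgn n * invn n`!) * (W ^+ n *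
       (\sum_(0 <= m < N) T (m + (n + k)).+1 * Pc V Rr m +
        \sum_(0 <= m < N) cst (invn m`!) * (S (m + (n + k)) * W ^+ m))))).
      apply: eqD_sum_nat => n _; apply: eqD_mul; first exact: eqD_refl.
      apply: eqD_mul; first exact: eqD_refl.
      apply: eqD_add; apply: SumC_nat => // m.
        by apply/ordge_mulr/ordge_Pc.
      exact/ordge_mulr/ordge_mulr/ordge_exp1.
    apply: eqD_eq; rewrite -big_split; apply: eq_big_nat => n _.
    rewrite !mulrDr !mulr_sumr; congr (_ + _); apply: eq_big_nat => m _.
      by rewrite /eNW /W; ring.
    by rewrite addnA /eNV; ring.
  apply: eqD_add; last exact: (tcore (fun j => S (j + k)) HN hW).
  apply: eqD_trans (dbl HN _) _.
    move=> n m; apply: ordge_mul; first exact/ordge_mulr/ordge_exp1.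
    exact/ordge_mulr/ordge_Pc.
  apply: eqD_eq; apply: eq_big_nat => s _; rewrite /conv mulr_suml.
  apply: eq_big_nat => n /andP[_ Hn].
  have -> : (s - n + (n + k) = s + k)%N by lia.
  by ring.
apply: eqD_trans (eqD_add e1 e2) _; apply: eqD_eq.
rewrite addrA -big_split /=.
rewrite big1 ?add0r // => s _.
by rewrite -mulrDl addrC key_s mul0r.
Qed.

End Main.

Theorem lemma2p2 (v r : ps) :
  v [::] = 0%R -> r [::] = 0%R -> EL1 v -> EL2 v r ->
  forall k : nat, tv k = t_inv v k /\ sv k = s_inv v r k.
Proof.
move=> hv hr h1 h2 k; split; [exact: t_part | exact: s_part].
Qed.
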